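(* Let $X\subseteq \mathbb{P}^1\times\mathbb{P}^1\times\mathbb{P}^1$ be a Ferrers variety of lines. Then $I_X$ is minimally generated by the set of forms $$\left\{ \prod_{i\le a}A_i\prod_{j\le b}B_j\prod_{k\le c}C_k \ :\ (a,b,c)\in \hat{D}(X) \right\}.$$
   Context: $R=K[x_{1,0},x_{1,1},x_{2,0},x_{2,1},x_{3,0},x_{3,1}]$ ($K$ algebraically closed, characteristic zero) trigraded by $\deg x_{i,j}=\mathbf e_i$, coordinate ring of $\mathbb{P}^1\times\mathbb{P}^1\times\mathbb{P}^1$. A variety of lines is $X= \bigcup_{(i,j)\in U_3(X)} \mathcal{L}(A_i,B_j)\cup\bigcup_{(i,k)\in U_2(X)} \mathcal{L}(A_i,C_k)\cup \bigcup_{(j,k)\in U_1(X)} \mathcal{L}(B_j,C_k)$, where $A_1,\ldots,A_{d_1}$, $B_1,\ldots,B_{d_2}$, $C_1,\ldots,C_{d_3}$ are linear forms of degrees $(1,0,0),(0,1,0),(0,0,1)$ defining the distinct hyperplanes containing some line of $X$, $\mathcal L(F,G)$ is the line defined by the ideal $(F,G)$, and $U_3(X)\subseteq[d_1]\times[d_2]$, $U_2(X)\subseteq[d_1]\times[d_3]$, $U_1(X)\subseteq[d_2]\times[d_3]$ with $[n]=\{1,\ldots,n\}$. Its ideal is $I_X=\bigcap_{U_3(X)} (A_i,B_j)\cap\bigcap_{U_2(X)} (A_i,C_k)\cap\bigcap_{U_1(X)} (B_j,C_k)$. $X$ is a Ferrers variety of lines if, for this labeling, each of $U_1(X),U_2(X),U_3(X)$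 is downward closed: $(u,v)\in U_h(X)\Rightarrow (u',v')\in U_h(X)$ for all $1\le u'\le u$, $1\le v'\le v$. Let $X_3,X_2,X_1$ be the unions of the lines of $X$ indexed by $U_3(X),U_2(X),U_1(X)$ respectively. Let $D_3(X)$ be the set of tridegrees (all of the form $(a,b,0)$) of a minimal homogeneous generating set of $I_{X_3}$, $D_2(X)$ the set of tridegrees (of the form $(a,0,c)$) of minimal generators of $I_{X_2}$, and $D_1(X)$ the set of tridegrees (of the form $(0,b,c)$) of minimal generators of $I_{X_1}$. Set $D(X)=\{(\max\{a_3,a_2\},\max\{b_3,b_1\},\max\{c_1,c_2\}) : (a_3,b_3,0)\in D_3(X),(a_2,0,c_2)\in D_2(X),(0,b_1,c_1)\in D_1(X)\}$ and let $\hat D(X)$ be the set of minimal elements of $D(X)$ with respect to the componentwise partial order on $\mathbb N^3$. *)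

(* Defs.v *)
From HB Require Import structures.
From mathcomp Require Import all_boot all_order all_algebra.
From mathcomp Require Import mpoly.
Set Implicit Arguments. Unset Strict Implicit. Unset Printing Implicit Defensive.
Import GRing.Theory.
Local Open Scope ring_scope.

(* The ring R = K[x_{1,0},x_{1,1},x_{2,0},x_{2,1},x_{3,0},x_{3,1}]:
   variable 'X_0 = x_{1,0}, 'X_1 = x_{1,1}, 'X_2 = x_{2,0}, 'X_3 = x_{2,1},
   'X_4 = x_{3,0}, 'X_5 = x_{3,1}. *)
Notation R6 K := {mpoly K[6]}.

Definition i0 : 'I_6 := @Ordinal 6 0 isT.
Definition i1 : 'I_6 := @Ordinal 6 1 isT.
Definition i2 : 'I_6 := @Ordinal 6 2 isT.
Definition i3 : 'I_6 := @Ordinal 6 3 isT.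
Definition i4 : 'I_6 := @Ordinal 6 4 isT.
Definition i5 : 'I_6 := @Ordinal 6 5 isT.

Definition tdeg (m : 'X_{1..6}) : nat * nat * nat :=
  ((m i0 + m i1)%N, (m i2 + m i3)%N, (m i4 + m i5)%N).

(* p is trihomogeneous of tridegree d (0 is homogeneous of every tridegree) *)
Definition thomog (K : nzRingType) (p : R6 K) (d : nat * nat * nat) : Prop :=
  forall m, m \in msupp p -> tdeg m = d.

Definition ideal_gen (K : comNzRingType) (S : R6 K -> Prop) (p : R6 K) : Prop :=
  exists l : seq (R6 K * R6 K),
    (forall pr, pr \in l -> S pr.2) /\ p = \sum_(pr <- l) pr.1 * pr.2.

Definition generates (K : comNzRingType) (S I : R6 K -> Prop) : Prop :=
  forall p, I p <-> ideal_gen S p.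

Definition min_generates (K : comNzRingType) (S I : R6 K -> Prop) : Prop :=
  generates S I /\ forall s, S s -> ~ ideal_gen (fun q => S q /\ q <> s) s.

Definition min_hom_generates (K : comNzRingType) (S I : R6 K -> Prop) : Prop :=
  min_generates S I /\ forall s, S s -> exists d, thomog s d.

Definition line_ideal (K : comNzRingType) (F G : R6 K) : R6 K -> Prop :=
  ideal_gen (fun q => q = F \/ q = G).

(* I_{X_3}, I_{X_2}, I_{X_1}, I_X  (empty intersection = whole ring) *)
Definition I_X3 (K : comNzRingType) (A B : nat -> R6 K) (U3 : nat -> nat -> Prop)
  (p : R6 K) : Prop := forall i j, U3 i j -> line_ideal (A i) (B j) p.
Definition I_X2 (K : comNzRingType) (A C : nat -> R6 K) (U2 : nat -> nat -> Prop)
  (p : R6 K) : Prop := forall i k, U2 i k -> line_ideal (A i) (C k) p.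
Definition I_X1 (K : comNzRingType) (B C : nat -> R6 K) (U1 : nat -> nat -> Prop)
  (p : R6 K) : Prop := forall j k, U1 j k -> line_ideal (B j) (C k) p.
Definition I_X (K : comNzRingType) (A B C : nat -> R6 K)
  (U3 U2 U1 : nat -> nat -> Prop) (p : R6 K) : Prop :=
  I_X3 A B U3 p /\ I_X2 A C U2 p /\ I_X1 B C U1 p.

Definition Dset (K : comNzRingType) (I : R6 K -> Prop) (d : nat * nat * nat) : Prop :=
  exists G, min_hom_generates G I /\ exists g, G g /\ g != 0 /\ thomog g d.

Definition DX (K : comNzRingType) (A B C : nat -> R6 K) (U3 U2 U1 : nat -> nat -> Prop)
  (d : nat * nat * nat) : Prop :=
  exists a3 b3 a2 c2 b1 c1,
    Dset (I_X3 A B U3) (a3, b3, 0%N) /\ Dset (I_X2 A C U2) (a2, 0%N, c2) /\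
    Dset (I_X1 B C U1) (0%N, b1, c1) /\
    d = (maxn a3 a2, maxn b3 b1, maxn c1 c2).

Definition le3 (d e : nat * nat * nat) : Prop :=
  (d.1.1 <= e.1.1)%N /\ (d.1.2 <= e.1.2)%N /\ (d.2 <= e.2)%N.

Definition DhatX (K : comNzRingType) (A B C : nat -> R6 K) (U3 U2 U1 : nat -> nat -> Prop)
  (d : nat * nat * nat) : Prop :=
  DX A B C U3 U2 U1 d /\ forall e, DX A B C U3 U2 U1 e -> le3 e d -> e = d.

Definition ferrers (U : nat -> nat -> Prop) (n1 n2 : nat) : Prop :=
  (forall u v, U u v -> (1 <= u <= n1)%N /\ (1 <= v <= n2)%N) /\
  (forall u v u' v', U u v -> (1 <= u' <= u)%N -> (1 <= v' <= v)%N -> U u' v').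

Definition distinct_forms (K : comNzRingType) (L : nat -> R6 K) (n : nat)
  (d : nat * nat * nat) : Prop :=
  (forall i, (1 <= i <= n)%N -> L i != 0 /\ thomog (L i) d) /\
  (forall i j, (1 <= i <= n)%N -> (1 <= j <= n)%N -> i <> j ->
     ~ exists c : K, L i = c *: L j).

(* Main.v *)
Require Import Defs.
From HB Require Import structures.
From mathcomp Require Import all_boot all_order all_algebra.
From mathcomp Require Import mpoly.
From mathcomp Require Import ring zify.
From Stdlib Require Import Classical.
Import GRing.Theory.
Local Open Scope ring_scope.
Set Implicit Arguments. Unset Strict Implicit.

Section Ideals.
Variable K : fieldType.
Local Notation R := {mpoly K[6]}.
Implicit Types (S : R -> Prop) (p q r : R).

Lemma ig0 S : ideal_gen S 0.
Proof. by exists [::]; split => //; rewrite big_nil. Qed.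

Lemma igD S p q : ideal_gen S p -> ideal_gen S q -> ideal_gen S (p + q).
Proof.
move=> [l1 [h1 ->]] [l2 [h2 ->]]; exists (l1 ++ l2); split; last by rewrite big_cat.
by move=> pr; rewrite mem_cat => /orP[]; [exact: h1|exact: h2].
Qed.

Lemma igM S r p : ideal_gen S p -> ideal_gen S (r * p).
Proof.
move=> [l [h ->]]; exists [seq (r * pr.1, pr.2) | pr <- l]; split.
  move=> pr /mapP [pr0 hin ->]; exact: (h pr0 hin).
by rewrite big_map mulr_sumr; apply: eq_bigr => pr _; rewrite mulrA.
Qed.

Lemma igG S s : S s -> ideal_gen S s.
Proof.
move=> hs; exists [:: (1, s)]; split; last by rewrite big_seq1 mul1r.
by move=> pr; rewrite inE => /eqP ->.
Qed.

Lemma igB S p q : ideal_gen S p -> ideal_gen S q -> ideal_gen S (p - q).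
Proof. by move=> hp hq; apply: igD => //; rewrite -mulN1r; apply: igM. Qed.

Lemma ig_trans S S' p : (forall s, S s -> ideal_gen S' s) -> ideal_gen S p -> ideal_gen S' p.
Proof.
move=> h [l [hl ->]]; elim: l hl => [|pr l IH] hl; first by rewrite big_nil; exact: ig0.
rewrite big_cons; apply: igD.
  by apply: igM; apply: h; apply: hl; rewrite inE eqxx.
by apply: IH => pr' hin; apply: hl; rewrite inE hin orbT.
Qed.

Lemma ig_mono S S' p : (forall s, S s -> S' s) -> ideal_gen S p -> ideal_gen S' p.
Proof. by move=> h; apply: ig_trans => s /h; apply: igG. Qed.

Lemma ig_mulmap S S' f p : (forall s, S s -> ideal_gen S' (f * s)) ->
  ideal_gen S p -> ideal_gen S' (f * p).
Proof.
move=> h [l [hl ->]]; elim: l hl => [|pr l IH] hl.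
  by rewrite big_nil mulr0; exact: ig0.
rewrite big_cons mulrDr; apply: igD.
  by rewrite mulrCA; apply: igM; apply: h; apply: hl; rewrite inE eqxx.
by apply: IH => pr' hin; apply: hl; rewrite inE hin orbT.
Qed.

Lemma ig_kill S (lq : 6.-tuple R) p : (forall s, S s -> comp_mpoly lq s = 0) ->
  ideal_gen S p -> comp_mpoly lq p = 0.
Proof.
move=> h [l [hl ->]]; rewrite raddf_sum /=; apply: big1_seq => pr /andP[_ hin].
by rewrite rmorphM /= (h pr.2) ?mulr0 //; exact: (hl pr hin).
Qed.

Lemma lineP (F G p : R) : line_ideal F G p <-> exists u v, p = u * F + v * G.
Proof.
split.
  move=> [l [h ->]]; elim: l h => [|pr l IH] h.
    by exists 0, 0; rewrite big_nil !mul0r addr0.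
  rewrite big_cons.
  have [u [v ->]] : exists u v, \sum_(pr <- l) pr.1 * pr.2 = u * F + v * G.
    by apply: IH => pr' hin; apply: h; rewrite inE hin orbT.
  have := h pr; rewrite inE eqxx => /(_ isT) [] ->.
    by exists (pr.1 + u), v; rewrite mulrDl addrA.
  by exists u, (pr.1 + v); rewrite mulrDl addrCA addrA.
move=> [u [v ->]]; apply: igD; apply: igM; apply: igG; [left|right] => //.
Qed.

End Ideals.


Section Subst.
Variable K : fieldType.
Local Notation R := {mpoly K[6]}.
Implicit Types (p q r D L M : R).

Definition inD D p := exists q, p = D * q.

Lemma inD0 D : inD D 0. Proof. by exists 0; rewrite mulr0. Qed.
Lemma inDD D p q : inD D p -> inD D q -> inD D (p + q).
Proof. by move=> [a ->] [b ->]; exists (a + b); rewrite mulrDr. Qed.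
Lemma inDM D p q : inD D q -> inD D (p * q).
Proof. by move=> [a ->]; exists (p * a); rewrite mulrCA. Qed.
Lemma inDMr D p q : inD D p -> inD D (p * q).
Proof. by move=> h; rewrite mulrC; apply: inDM. Qed.
Lemma inDZ D c p : inD D p -> inD D (c *: p).
Proof. by move=> h; rewrite -mul_mpolyC; apply: inDM. Qed.

Lemma X_neq0 (i : 'I_6) : ('X_i : R) != 0.
Proof.
apply/eqP => h; have := @mcoeffXU 6 K i i; rewrite h mcoeff0 eqxx => /eqP.
by rewrite eq_sym oner_eq0.
Qed.

Definition sub (w : 'I_6) (t : R) : 6.-tuple R :=
  [tuple if i == w then t else 'X_i | i < 6].

Lemma sub_X w t (i : 'I_6) : comp_mpoly (sub w t) 'X_i = if i == w then t else 'X_i.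
Proof. by rewrite comp_mpolyXU -tnth_nth tnth_mktuple. Qed.

Lemma comp_diff D (lq : 6.-tuple R) :
  (forall i : 'I_6, inD D ('X_i - comp_mpoly lq 'X_i)) ->
  forall p, inD D (p - comp_mpoly lq p).
Proof.
move=> hX; elim/mpolyind => [|c m p _ _ IH].
  by rewrite raddf0 subr0; apply: inD0.
rewrite raddfD /= comp_mpolyZ opprD addrACA -scalerBr.
apply: inDD => //; apply: inDZ.
rewrite comp_mpolyX [X in X - _]mpolyXE_id.
elim/big_rec2: _ => [|i y2 y1 _ h]; first by rewrite subrr; apply: inD0.
have hXi : inD D ('X_i - tnth lq i) by have := hX i; rewrite comp_mpolyXU -tnth_nth.
have hpow : forall n, inD D ('X_i ^+ n - tnth lq i ^+ n).
  elim=> [|n IHn]; first by rewrite !expr0 subrr; apply: inD0.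
  rewrite !exprS.
  have -> : 'X_i * 'X_i ^+ n - tnth lq i * tnth lq i ^+ n =
     'X_i * ('X_i ^+ n - tnth lq i ^+ n) + ('X_i - tnth lq i) * tnth lq i ^+ n.
    by rewrite mulrBr mulrBl addrA subrK.
  by apply: inDD; [apply: inDM|apply: inDMr].
set a := 'X_i ^+ _; set b := tnth lq i ^+ _.
have -> : a * y1 - b * y2 = a * (y1 - y2) + (a - b) * y2.
  by rewrite mulrBr mulrBl addrA subrK.
by apply: inDD; [apply: inDM|apply: inDMr; apply: hpow].
Qed.

Definition lin (v w : 'I_6) L := exists a b : K, L = a *: 'X_v + b *: 'X_w.

Lemma kill_spec (v w : 'I_6) L : v != w -> lin v w L -> L != 0 ->
 exists lq : 6.-tuple R,
  [/\ comp_mpoly lq L = 0,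
      forall p, exists q, p = comp_mpoly lq p + L * q,
      forall u : 'I_6, u != v -> u != w -> comp_mpoly lq 'X_u = 'X_u,
      forall M, lin v w M -> lin v w (comp_mpoly lq M) &
      forall M, lin v w M -> ~ (exists c, M = c *: L) -> comp_mpoly lq M != 0].
Proof.
move=> nvw [a [b ->]] nzL.
have ewv : (w == v) = false by rewrite eq_sym; apply/negbTE.
have compM : forall lq : 6.-tuple R, forall g d : K,
    comp_mpoly lq (g *: 'X_v + d *: 'X_w) =
    g *: comp_mpoly lq 'X_v + d *: comp_mpoly lq 'X_w.
  by move=> lq g d; rewrite raddfD /= !comp_mpolyZ.
have [a0|an0] := eqVneq a 0.
  subst a; rewrite scale0r add0r in nzL *.
  have b0 : b != 0 by apply: contraNneq nzL => ->; rewrite scale0r.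
  exists (sub w 0); split.
  - by rewrite comp_mpolyZ sub_X eqxx scaler0.
  - move=> p; have [q hq] : inD (b *: 'X_w) (p - comp_mpoly (sub w 0) p).
      apply: comp_diff => i; rewrite sub_X; case: eqP => [->|_].
        by exists (b^-1)%:MP; rewrite subr0 [X in _ = X]mulrC mul_mpolyC scalerA mulVf // scale1r.
      by rewrite subrr; apply: inD0.
    by exists q; rewrite -hq addrC subrK.
  - by move=> u hv hw; rewrite sub_X (negbTE hw).
  - move=> M [g [d ->]]; rewrite compM !sub_X eqxx (negbTE nvw) scaler0 addr0.
    by exists g, 0; rewrite scale0r addr0.
  - move=> M [g [d ->]] hnp; rewrite compM !sub_X eqxx (negbTE nvw) scaler0 addr0.
    rewrite scaler_eq0 (negbTE (X_neq0 v)) orbF; apply/eqP => g0; apply: hnp.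
    by exists (d / b); rewrite g0 scale0r add0r scalerA divfK.
pose t := (- (b / a)) *: ('X_w : R).
exists (sub v t); split.
- rewrite compM !sub_X eqxx ewv /t scalerA -scalerDl.
  by rewrite mulrN mulrCA divff // mulr1 addNr scale0r.
- move=> p; have [q hq] : inD (a *: 'X_v + b *: 'X_w) (p - comp_mpoly (sub v t) p).
    apply: comp_diff => i; rewrite sub_X; case: eqP => [->|_].
      exists (a^-1)%:MP; rewrite [X in _ = X]mulrC mul_mpolyC scalerDr !scalerA mulVf // scale1r /t.
      by rewrite scaleNr opprK mulrC.
    by rewrite subrr; apply: inD0.
  by exists q; rewrite -hq addrC subrK.
- by move=> u hv hw; rewrite sub_X (negbTE hv).
- move=> M [g [d ->]]; rewrite compM !sub_X eqxx ewv /t scalerA -scalerDl.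
  by exists 0, (g * - (b / a) + d); rewrite scale0r add0r.
- move=> M [g [d ->]] hnp; rewrite compM !sub_X eqxx ewv /t scalerA -scalerDl.
  rewrite scaler_eq0 (negbTE (X_neq0 w)) orbF; apply/eqP => h0; apply: hnp.
  exists (g / a); rewrite scalerDr !scalerA divfK //; congr (_ + _); congr (_ *: _).
  apply/eqP; rewrite -subr_eq0 -h0; apply/eqP; ring.
Qed.

End Subst.


Section Cancel.
Variable K : fieldType.
Local Notation R := {mpoly K[6]}.
Implicit Types (p q r D L M : R).

Lemma comp_fix_lin (lq : 6.-tuple R) (u u' : 'I_6) L :
  comp_mpoly lq 'X_u = 'X_u -> comp_mpoly lq 'X_u' = 'X_u' -> lin u u' L ->
  comp_mpoly lq L = L.
Proof.
by move=> h1 h2 [a [b ->]]; rewrite raddfD /= !comp_mpolyZ h1 h2.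
Qed.

Definition goodp (v w : 'I_6) M L :=
  (lin v w L /\ ~ (exists c, L = c *: M)) \/
  (exists u u' : 'I_6, [/\ lin u u' L, L != 0 & [&& u != v, u != w, u' != v & u' != w]]).

Lemma cancel_prin (v w : 'I_6) M L f : v != w -> lin v w M -> M != 0 ->
  goodp v w M L -> inD M (L * f) -> inD M f.
Proof.
move=> vw lM nzM gL [q hq].
have [lq [k1 k2 k3 k4 k5]] := kill_spec vw lM nzM.
have hL : comp_mpoly lq L != 0.
  case: gL => [[lL np]|[u [u' [lL nzL /and4P[uv uw u'v u'w]]]]]; first exact: k5.
  by rewrite (comp_fix_lin (k3 _ uv uw) (k3 _ u'v u'w) lL).
have : comp_mpoly lq (L * f) = 0 by rewrite hq rmorphM /= k1 mul0r.
rewrite rmorphM /= => /eqP; rewrite mulf_eq0 (negbTE hL) /= => /eqP hf.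
by have [q' ->] := k2 f; exists q'; rewrite hf add0r.
Qed.

Definition goodl (v w v' w' : 'I_6) M1 M2 L :=
  (lin v w L /\ ~ (exists c, L = c *: M1)) \/
  (lin v' w' L /\ ~ (exists c, L = c *: M2)) \/
  (exists u u' : 'I_6, [/\ lin u u' L, L != 0,
     [&& u != v, u != w, u != v' & u != w'] & [&& u' != v, u' != w, u' != v' & u' != w']]).

Definition blocks2 (v w v' w' : 'I_6) :=
  [&& v != w, v' != w', v != v', v != w', w != v' & w != w'].

Lemma cancel_line (v w v' w' : 'I_6) M1 M2 L f : blocks2 v w v' w' ->
  lin v w M1 -> M1 != 0 -> lin v' w' M2 -> M2 != 0 ->
  goodl v w v' w' M1 M2 L -> line_ideal M1 M2 (L * f) -> line_ideal M1 M2 f.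
Proof.
move=> /and5P [vw v'w' vv' vw' /andP[wv' ww']] l1 nz1 l2 nz2 gL /lineP [a [b hab]].
have [lq1 [k1 k2 k3 k4 k5]] := kill_spec vw l1 nz1.
have [lq2 [j1 j2 j3 j4 j5]] := kill_spec v'w' l2 nz2.
have fixM1 : comp_mpoly lq2 M1 = M1.
  by apply: comp_fix_lin l1; apply: j3; rewrite // eq_sym.
have fix1 : forall N, lin v' w' N -> comp_mpoly lq1 N = N.
  by move=> N; apply: comp_fix_lin; apply: k3; rewrite // eq_sym.
have hL : comp_mpoly lq1 (comp_mpoly lq2 L) != 0.
  case: gL => [[lL np]|[[lL np]|[u [u' [lL nzL /and4P[h1 h2 h3 h4] /and4P[h5 h6 h7 h8]]]]]].
  - by rewrite (comp_fix_lin (j3 _ vv' vw') (j3 _ wv' ww') lL) (k5 _ lL np).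
  - by rewrite fix1; [exact: (j5 _ lL np) | exact: (j4 _ lL)].
  - by rewrite (comp_fix_lin (j3 _ h3 h4) (j3 _ h7 h8) lL) (comp_fix_lin (k3 _ h1 h2) (k3 _ h5 h6) lL).
have : comp_mpoly lq1 (comp_mpoly lq2 (L * f)) = 0.
  by rewrite hab !rmorphD !rmorphM /= fixM1 k1 j1 !rmorph0 /= !mulr0 addr0.
rewrite !rmorphM /= => /eqP; rewrite mulf_eq0 (negbTE hL) /= => /eqP hf.
have [q2 e2] := j2 f; have [q1 e1] := k2 (comp_mpoly lq2 f).
apply/lineP; exists q1, q2; rewrite e2 e1 hf add0r [M1 * _]mulrC [M2 * _]mulrC.
by [].
Qed.

End Cancel.


Section Prods.
Variable K : fieldType.
Local Notation R := {mpoly K[6]}.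
Implicit Types (p q r f : R) (F : nat -> R).

Definition pr F a := \prod_(1 <= i < a.+1) F i.

Lemma pr0 F : pr F 0 = 1.
Proof. by rewrite /pr big_geq. Qed.

Lemma pr_split F a b : pr F (a + b) = pr F a * pr (fun i => F (i + a)) b.
Proof.
rewrite /pr (@big_cat_nat _ _ _ a.+1) //= ?ltnS ?leq_addr //.
by rewrite -[a.+1]add1n big_addn -addnS addKn.
Qed.

Lemma pr_S F a : pr F a.+1 = F 1 * pr (fun i => F (i + 1)) a.
Proof. by rewrite -[a.+1]add1n pr_split /pr big_nat1. Qed.



Lemma pr_Sr F a : pr F a.+1 = pr F a * F a.+1.
Proof. by rewrite /pr big_nat_recr. Qed.

Lemma pr_factor F a i : (0 < i <= a)%N -> exists t, pr F a = F i * t.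
Proof.
move=> /andP [i0 ia]; rewrite -(subnKC ia) pr_split; case: i i0 {ia} => // i _.
by rewrite pr_Sr; exists (pr F i * pr (fun j => F (j + i.+1)) (a - i.+1)); ring.
Qed.

Lemma pr_le F a b : (a <= b)%N -> exists t, pr F b = pr F a * t.
Proof. by move=> ab; rewrite -(subnKC ab) pr_split; eexists. Qed.

Lemma pr_neq0 F a : (forall i, (0 < i <= a)%N -> F i != 0) -> pr F a != 0.
Proof.
move=> h; rewrite /pr big_nat_cond; apply: (big_ind (fun x => x != 0)).
- exact: oner_neq0.
- by move=> x y hx hy; rewrite mulf_neq0.
- by move=> i; rewrite andbT ltnS => /h.
Qed.

Lemma cancel_prin_pr (v w : 'I_6) M F a f : v != w -> lin v w M -> M != 0 ->
  (forall i, (0 < i <= a)%N -> goodp v w M (F i)) -> inD M (pr F a * f) -> inD M f.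
Proof.
move=> vw lM nzM; elim: a => [|a IH] h; first by rewrite pr0 mul1r.
rewrite pr_Sr [pr F a * _]mulrC -mulrA => hin; apply: IH.
  by move=> i /andP [i0 ia]; apply: h; rewrite i0 ltnW.
by apply: (cancel_prin vw lM nzM _ hin); apply: h; rewrite leqnn.
Qed.

Lemma cancel_line_pr (v w v' w' : 'I_6) M1 M2 F a f : blocks2 v w v' w' ->
  lin v w M1 -> M1 != 0 -> lin v' w' M2 -> M2 != 0 ->
  (forall i, (0 < i <= a)%N -> goodl v w v' w' M1 M2 (F i)) ->
  line_ideal M1 M2 (pr F a * f) -> line_ideal M1 M2 f.
Proof.
move=> bl l1 n1 l2 n2; elim: a => [|a IH] h; first by rewrite pr0 mul1r.
rewrite pr_Sr [pr F a * _]mulrC -mulrA => hin; apply: IH.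
  by move=> i /andP [i0 ia]; apply: h; rewrite i0 ltnW.
by apply: (cancel_line bl l1 n1 l2 n2 _ hin); apply: h; rewrite leqnn.
Qed.

Definition fam (v w : 'I_6) F (n : nat) :=
  (forall i, (0 < i <= n)%N -> F i != 0 /\ lin v w (F i)) /\
  (forall i j, (0 < i <= n)%N -> (0 < j <= n)%N -> i <> j -> ~ exists c, F i = c *: F j).

Lemma prin_pr (v w : 'I_6) F n r : v != w -> fam v w F n ->
  (forall j, (0 < j <= n)%N -> inD (F j) r) -> inD (pr F n) r.
Proof.
move=> vw [hF hd]; elim: n hF hd => [|n IH] hF hd h.
  by exists r; rewrite pr0 mul1r.
have [s hs] : inD (pr F n) r.
  apply: IH => [i /andP[i0 io]|i j /andP[i0 io] /andP[j0 jo]|j /andP[j0 jo]].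
  - by apply: hF; rewrite i0 ltnW.
  - by apply: hd; rewrite ?i0 ?j0 ltnW.
  - by apply: h; rewrite j0 ltnW.
have hn : (0 < n.+1 <= n.+1)%N by rewrite leqnn.
have [nz ln] := hF _ hn.
have [t ht] : inD (F n.+1) s.
  apply: (cancel_prin_pr vw ln nz (F := F) (a := n)); last by rewrite -hs; apply: h hn.
  move=> i /andP [i0 io]; have hi : (0 < i <= n.+1)%N by rewrite i0 ltnW.
  left; split; first by case: (hF i hi).
  by apply: hd => // e; rewrite e ltnn in io.
by exists t; rewrite hs ht pr_Sr mulrA.
Qed.

End Prods.


Section Main.
Variable K : fieldType.
Local Notation R := {mpoly K[6]}.
Implicit Types (p q r f : R) (F : nat -> R).

Lemma fam0 (v w : 'I_6) F : fam v w F 0.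
Proof. by split => [i|i j]; lia. Qed.

Lemma fam_le (v w : 'I_6) F n m : fam v w F n -> (m <= n)%N -> fam v w F m.
Proof.
move=> [h1 h2] mn; split => [i hi|i j hi hj]; [apply: h1|apply: h2]; lia.
Qed.

Lemma fam_shift (v w : 'I_6) F n k : fam v w F n -> (k <= n)%N ->
  fam v w (fun i => F (i + k)%N) (n - k).
Proof.
move=> [h1 h2] kn; split => [i hi|i j hi hj ij]; first (apply: h1; lia).
apply: h2; lia.
Qed.

Definition emp : nat -> nat -> Prop := fun _ _ => False.

Lemma ferrers_emp n1 n2 : ferrers emp n1 n2.
Proof. by split. Qed.

Lemma blocks2_sym (v w v' w' : 'I_6) : blocks2 v w v' w' -> blocks2 v' w' v w.
Proof.
move=> /and5P [h1 h2 h3 h4 /andP [h5 h6]].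
by rewrite /blocks2 h1 h2 !(eq_sym v') !(eq_sym w') h3 h4 h5 h6.
Qed.

Definition PP (A B C : nat -> R) a b c := pr A a * pr B b * pr C c.
Definition NN (U3 U2 U1 : nat -> nat -> Prop) a b c :=
  ~ U3 a.+1 b.+1 /\ ~ U2 a.+1 c.+1 /\ ~ U1 b.+1 c.+1.
Definition JJ (A B C : nat -> R) U3 U2 U1 :=
  ideal_gen (fun q => exists a b c, NN U3 U2 U1 a b c /\ q = PP A B C a b c).

Lemma row_len U n1 n2 i : ferrers U n1 n2 ->
  exists l, (l <= n2)%N /\ forall j, (0 < j)%N -> (U i j <-> (j <= l)%N).
Proof.
move=> [box down].
have H : forall m, exists l, (l <= m)%N /\
    forall j, (0 < j <= m)%N -> (U i j <-> (j <= l)%N).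
  elim => [|m [l [lm hl]]]; first by exists 0%N; split => // j; lia.
  case: (classic (U i m.+1)) => hU.
    exists m.+1; split => // j hj; split => _; first lia.
    have [hi _] := box _ _ hU.
    by apply: (down _ _ _ _ hU); lia.
  exists l; split; first lia.
  move=> j hj; case: (ltngtP j m.+1) => hjm.
  - by apply: hl; lia.
  - lia.
  - by subst j; split => // ?; lia.
have [l [ln hl]] := H n2; exists l; split => // j j0.
case: (leqP j n2) => jn; first by apply: hl; lia.
by split => [/box [_ ?]|?]; lia.
Qed.

Definition claim_at (n : nat) := forall (a0 a1 b0 b1 c0 c1 : 'I_6) d1 d2 d3
  (A B C : nat -> R) (U3 U2 U1 : nat -> nat -> Prop),
  (d1 + d2 + d3 <= n)%N -> blocks2 a0 a1 b0 b1 -> blocks2 a0 a1 c0 c1 ->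
  blocks2 b0 b1 c0 c1 ->
  fam a0 a1 A d1 -> fam b0 b1 B d2 -> fam c0 c1 C d3 ->
  ferrers U3 d1 d2 -> ferrers U2 d1 d3 -> ferrers U1 d2 d3 ->
  forall p, I_X A B C U3 U2 U1 p -> JJ A B C U3 U2 U1 p.

End Main.


Section StepA.
Variable K : fieldType.
Local Notation R := {mpoly K[6]}.

Lemma stepA n : (forall m, (m < n)%N -> claim_at K m) ->
  forall (a0 a1 b0 b1 c0 c1 : 'I_6) d1 d2 d3
  (A B C : nat -> R) (U3 U2 U1 : nat -> nat -> Prop),
  (d1 + d2 + d3 <= n)%N -> blocks2 a0 a1 b0 b1 -> blocks2 a0 a1 c0 c1 ->
  blocks2 b0 b1 c0 c1 ->
  fam a0 a1 A d1 -> fam b0 b1 B d2 -> fam c0 c1 C d3 ->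
  ferrers U3 d1 d2 -> ferrers U2 d1 d3 -> ferrers U1 d2 d3 ->
  (U3 1%N 1%N \/ U2 1%N 1%N) ->
  forall p, I_X A B C U3 U2 U1 p -> JJ A B C U3 U2 U1 p.
Proof.
rewrite /claim_at; move=> IH a0 a1 b0 b1 c0 c1 d1 d2 d3 A B C U3 U2 U1 hn hb_ab hb_ac hb_bc
  hA hB hC hU3 hU2 hU1 h11 p [hp3 [hp2 hp1]].
move: (hb_ab) => /and5P [a01 b01 a0b0 a0b1 /andP[a1b0 a1b1]].
move: (hb_ac) => /and5P [_ c01 a0c0 a0c1 /andP[a1c0 a1c1]].
move: (hb_bc) => /and5P [_ _ b0c0 b0c1 /andP[b1c0 b1c1]].
have [hA1 hA2] := hA; have [hB1 hB2] := hB; have [hC1 hC2] := hC.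
have [box3 down3] := hU3; have [box2 down2] := hU2; have [box1 down1] := hU1.
have d1pos : (0 < d1)%N.
  by case: h11 => [/box3|/box2] [/andP [_ ?] _].
have [nzA1 lA1] : A 1%N != 0 /\ lin a0 a1 (A 1%N) by apply: hA1; rewrite d1pos.
have [lam [lamd2 hlam]] := row_len 1 hU3.
have [mu [mud3 hmu]] := row_len 1 hU2.
have [lq [k1 k2 k3 k4 k5]] := kill_spec a01 lA1 nzA1.
have fixB : forall j, (0 < j <= d2)%N -> comp_mpoly lq (B j) = B j.
  move=> j hj; have [_ lBj] := hB1 j hj.
  by apply: (comp_fix_lin _ _ lBj); apply: k3; rewrite eq_sym.
have fixC : forall k, (0 < k <= d3)%N -> comp_mpoly lq (C k) = C k.
  move=> k hk; have [_ lCk] := hC1 k hk.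
  by apply: (comp_fix_lin _ _ lCk); apply: k3; rewrite eq_sym.
set r := comp_mpoly lq p.
have [q hq] := k2 p; rewrite -/r in hq.
have hrB : forall j, (0 < j <= lam)%N -> inD (B j) r.
  move=> j /andP [j0 jl]; have U31j : U3 1%N j by apply/hlam.
  have /lineP [u [v huv]] := hp3 _ _ U31j.
  exists (comp_mpoly lq v); rewrite /r huv rmorphD !rmorphM /= k1 fixB; last by rewrite j0 (leq_trans jl lamd2).
  by rewrite mulr0 add0r mulrC.
have hrC : forall k, (0 < k <= mu)%N -> inD (C k) r.
  move=> k /andP [k0 kl]; have U21k : U2 1%N k by apply/hmu.
  have /lineP [u [v huv]] := hp2 _ _ U21k.
  exists (comp_mpoly lq v); rewrite /r huv rmorphD !rmorphM /= k1 fixC; last by rewrite k0 (leq_trans kl mud3).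
  by rewrite mulr0 add0r mulrC.
have hrL : forall j k, U1 j k -> line_ideal (B j) (C k) r.
  move=> j k hU; have [hj hk] := box1 _ _ hU.
  have /lineP [u [v huv]] := hp1 _ _ hU.
  apply/lineP; exists (comp_mpoly lq u), (comp_mpoly lq v).
  by rewrite /r huv rmorphD !rmorphM /= fixB ?fixC.
set A' := fun i => A (i + 1)%N.
set U3' := fun i j => (0 < i)%N /\ U3 (i + 1)%N j.
set U2' := fun i k => (0 < i)%N /\ U2 (i + 1)%N k.
have hAq_line : forall M1 M2, line_ideal M1 M2 p -> line_ideal M1 M2 r ->
    line_ideal M1 M2 (A 1%N * q).
  move=> M1 M2 h1 h2; have -> : A 1%N * q = p - r by rewrite {1}hq [r + _]addrC addrK.
  exact: igB.
have ne1 : forall i, (0 < i)%N -> 1%N <> (i + 1)%N.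
  by move=> i i0 e; move: i0; rewrite (_ : i = 0%N) //; apply/eqP; rewrite -(eqn_add2r 1) -e.
have hd1 : (0 < 1 <= d1)%N by rewrite d1pos.
have hq' : I_X A' B C U3' U2' U1 q.
  split; [|split].
  - move=> i j [i0 hU]; have [/andP[_ hi1] /andP [j0 jd2]] := box3 _ _ hU.
    have jl : (j <= lam)%N.
      by apply/hlam => //; apply: (down3 _ _ _ _ hU) => //; rewrite ?addn1 ?j0 ?leqnn.
    have hi : (0 < i + 1 <= d1)%N by rewrite hi1 addn1.
    have [nzAi lAi] := hA1 _ hi.
    have [nzBj lBj] := hB1 j (introT andP (conj j0 jd2)).
    apply: (cancel_line hb_ab lAi nzAi lBj nzBj (L := A 1%N)).
      by left; split => //; apply: hA2 => //; apply: ne1.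
    apply: hAq_line; first exact: hp3 _ _ hU.
    apply/lineP; have [t ->] := hrB j (introT andP (conj j0 jl)).
    by exists 0, t; rewrite mul0r add0r mulrC.
  - move=> i k [i0 hU]; have [/andP[_ hi1] /andP [k0 kd3]] := box2 _ _ hU.
    have kl : (k <= mu)%N.
      by apply/hmu => //; apply: (down2 _ _ _ _ hU) => //; rewrite ?addn1 ?k0 ?leqnn.
    have hi : (0 < i + 1 <= d1)%N by rewrite hi1 addn1.
    have [nzAi lAi] := hA1 _ hi.
    have [nzCk lCk] := hC1 k (introT andP (conj k0 kd3)).
    apply: (cancel_line hb_ac lAi nzAi lCk nzCk (L := A 1%N)).
      by left; split => //; apply: hA2 => //; apply: ne1.
    apply: hAq_line; first exact: hp2 _ _ hU.
    apply/lineP; have [t ->] := hrC k (introT andP (conj k0 kl)).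
    by exists 0, t; rewrite mul0r add0r mulrC.
  - move=> j k hU; have [hj hk] := box1 _ _ hU.
    have [nzBj lBj] := hB1 j hj; have [nzCk lCk] := hC1 k hk.
    apply: (cancel_line hb_bc lBj nzBj lCk nzCk (L := A 1%N)); last first.
      by apply: hAq_line; [exact: hp1|exact: hrL].
    by right; right; exists a0, a1; split; rewrite // ?a0b0 ?a0b1 ?a0c0 ?a0c1 ?a1b0 ?a1b1 ?a1c0.
have Jq : JJ A' B C U3' U2' U1 q.
  have hlt : ((d1 - 1) + d2 + d3 < n)%N by clear -hn d1pos; lia.
  apply: (IH _ hlt a0 a1 b0 b1 c0 c1 (d1 - 1)%N d2 d3 A' B C U3' U2' U1) => //.
  - exact: fam_shift hA d1pos.
  - split.
      move=> u v [u0 hU]; have [/andP[_ h] hv] := box3 _ _ hU; split => //.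
      by clear -u0 h; apply/andP; split => //; lia.
    move=> u v u' v' [u0 hU] hu hv; split; first by clear -hu; lia.
    by apply: (down3 _ _ _ _ hU) => //; clear -hu; lia.
  - split.
      move=> u v [u0 hU]; have [/andP[_ h] hv] := box2 _ _ hU; split => //.
      by clear -u0 h; apply/andP; split => //; lia.
    move=> u v u' v' [u0 hU] hu hv; split; first by clear -hu; lia.
    by apply: (down2 _ _ _ _ hU) => //; clear -hu; lia.
have JAq : JJ A B C U3 U2 U1 (A 1%N * q).
  apply: (ig_mulmap _ Jq) => t [a [b [c [[n3 [n2 n1]] ->]]]].
  apply: igG; exists a.+1, b, c; split.
    split; [|split] => //.
    + by move=> h; apply: n3; split => //; rewrite addn1.
    + by move=> h; apply: n2; split => //; rewrite addn1.
  by rewrite /PP pr_S /A'; ring.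
have [s1 hs1] : inD (pr B lam) r := prin_pr b01 (fam_le hB lamd2) hrB.
have [s hs] : inD (pr C mu) s1.
  apply: (prin_pr c01 (fam_le hC mud3)) => k /andP [k0 kl].
  have [nzCk lCk] := hC1 k (introT andP (conj k0 (leq_trans kl mud3))).
  apply: (cancel_prin_pr c01 lCk nzCk (F := B) (a := lam)); last first.
    by rewrite -hs1; apply: hrC; rewrite k0.
  move=> j /andP [j0 jl]; right; exists b0, b1.
  have [nzBj lBj] := hB1 j (introT andP (conj j0 (leq_trans jl lamd2))).
  by split; rewrite // b0c0 b0c1 b1c0 b1c1.
set B'' := fun j => B (j + lam)%N.
set C'' := fun k => C (k + mu)%N.
set U1'' := fun j k => (0 < j)%N /\ (0 < k)%N /\ U1 (j + lam)%N (k + mu)%N.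
have hs' : I_X A B'' C'' emp emp U1'' s.
  split; [by []|split; [by []|]].
  move=> j k [j0 [k0 hU]]; have [hj hk] := box1 _ _ hU.
  have [nzBj lBj] := hB1 _ hj; have [nzCk lCk] := hC1 _ hk.
  have hl := hrL _ _ hU; rewrite hs1 hs in hl.
  have hl2 := cancel_line_pr hb_bc lBj nzBj lCk nzCk _ hl.
  apply: (cancel_line_pr hb_bc lBj nzBj lCk nzCk (F := C) (a := mu)); last first.
    apply: hl2 => i /andP [i0 il]; left.
    have hi : (0 < i <= d2)%N by rewrite i0 (leq_trans il lamd2).
    split; first by case: (hB1 i hi).
    apply: hB2 => // e; move: il; rewrite e; clear -j0; lia.
  move=> i /andP [i0 il]; right; left.
  have hi : (0 < i <= d3)%N by rewrite i0 (leq_trans il mud3).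
  split; first by case: (hC1 i hi).
  apply: hC2 => // e; move: il; rewrite e; clear -k0; lia.
have Js : JJ A B'' C'' emp emp U1'' s.
  have hlt : (0 + (d2 - lam) + (d3 - mu) < n)%N by clear -hn d1pos lamd2 mud3; lia.
  apply: (IH _ hlt a0 a1 b0 b1 c0 c1 0%N (d2 - lam)%N (d3 - mu)%N
     A B'' C'' emp emp U1'') => //.
  - exact: fam0.
  - exact: fam_shift hB lamd2.
  - exact: fam_shift hC mud3.
  - split.
      move=> u v [u0 [v0 hU]]; have [/andP[_ hu] /andP[_ hv]] := box1 _ _ hU.
      by split; apply/andP; split => //; clear -hu hv; lia.
    move=> u v u' v' [u0 [v0 hU]] hu hv; split; first by clear -hu; lia.
    split; first by clear -hv; lia.
    by apply: (down1 _ _ _ _ hU); clear -hu hv; lia.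
have Jr : JJ A B C U3 U2 U1 r.
  rewrite hs1 hs mulrA; apply: (ig_mulmap _ Js) => t [a [b [c [[_ [_ n1]] ->]]]].
  apply: igG; exists a, (lam + b)%N, (mu + c)%N; split.
    split; [|split].
    + move=> hU; have : U3 1%N (lam + b).+1.
        by apply: (down3 _ _ _ _ hU); clear; lia.
      by move/hlam => /(_ isT); clear; lia.
    + move=> hU; have : U2 1%N (mu + c).+1.
        by apply: (down2 _ _ _ _ hU); clear; lia.
      by move/hmu => /(_ isT); clear; lia.
    + move=> hU; apply: n1; split => //; split => //.
      by rewrite !addSn addnC (addnC c).
  by rewrite /PP !pr_split /B'' /C''; ring.
by rewrite {1}hq; apply: igD.
Qed.

End StepA.


Section MainInd.
Variable K : fieldType.
Local Notation R := {mpoly K[6]}.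

Lemma main_claim n : claim_at K n.
Proof.
elim/ltn_ind: n => n IH.
move=> a0 a1 b0 b1 c0 c1 d1 d2 d3 A B C U3 U2 U1 hn hb_ab hb_ac hb_bc
  hA hB hC hU3 hU2 hU1 p hp.
case: (classic (U3 1%N 1%N \/ U2 1%N 1%N)) => h11.
  exact: (stepA IH hn hb_ab hb_ac hb_bc hA hB hC hU3 hU2 hU1 h11 hp).
have e3 : forall i j, ~ U3 i j.
  move=> i j hU; apply: h11; left; have [hi hj] := hU3.1 _ _ hU.
  by apply: (hU3.2 _ _ _ _ hU); rewrite ?leqnn ?(andP hi).1 ?(andP hj).1.
have e2 : forall i j, ~ U2 i j.
  move=> i j hU; apply: h11; right; have [hi hj] := hU2.1 _ _ hU.
  by apply: (hU2.2 _ _ _ _ hU); rewrite ?leqnn ?(andP hi).1 ?(andP hj).1.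
case: (classic (U1 1%N 1%N)) => h1.
  have hn' : (d2 + d3 + 0 <= n)%N by clear -hn; lia.
  have := stepA (n := n) IH (a0 := b0) (a1 := b1) (b0 := c0) (b1 := c1) (c0 := a0) (c1 := a1)
    (d1 := d2) (d2 := d3) (d3 := 0%N) (A := B) (B := C) (C := A) (U3 := U1) (U2 := emp) (U1 := emp)
    hn' hb_bc (blocks2_sym hb_ab) (blocks2_sym hb_ac) hB hC (fam0 _ _ A) hU1 (ferrers_emp _ _)
    (ferrers_emp _ _) (or_introl h1) (p := p).
  have hpr : I_X B C A U1 emp emp p by split; [exact: hp.2.2 | split => ? ? []].
  move/(_ hpr); apply: ig_mono => s [a [b [c [[n1 _] ->]]]].
  exists c, a, b; split; first by split; [apply: e3|split; [apply: e2|]].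
  by rewrite /PP; ring.
have e1 : forall i j, ~ U1 i j.
  move=> i j hU; apply: h1; have [hi hj] := hU1.1 _ _ hU.
  by apply: (hU1.2 _ _ _ _ hU); rewrite ?leqnn ?(andP hi).1 ?(andP hj).1.
rewrite -[p]mulr1; apply: igM; apply: igG; exists 0%N, 0%N, 0%N; split.
  by split; [apply: e3|split; [apply: e2|apply: e1]].
by rewrite /PP !pr0 !mulr1.
Qed.

Lemma gen_N (a0 a1 b0 b1 c0 c1 : 'I_6) d1 d2 d3
  (A B C : nat -> R) (U3 U2 U1 : nat -> nat -> Prop) :
  blocks2 a0 a1 b0 b1 -> blocks2 a0 a1 c0 c1 -> blocks2 b0 b1 c0 c1 ->
  fam a0 a1 A d1 -> fam b0 b1 B d2 -> fam c0 c1 C d3 ->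
  ferrers U3 d1 d2 -> ferrers U2 d1 d3 -> ferrers U1 d2 d3 ->
  forall p, I_X A B C U3 U2 U1 p <-> JJ A B C U3 U2 U1 p.
Proof.
move=> hb_ab hb_ac hb_bc hA hB hC hU3 hU2 hU1 p; split.
  exact: (@main_claim (d1 + d2 + d3) a0 a1 b0 b1 c0 c1 d1 d2 d3 A B C U3 U2 U1 (leqnn _)).
have [box3 down3] := hU3; have [box2 down2] := hU2; have [box1 down1] := hU1.
move=> hJ; split; [|split].
- move=> i j hU; apply: (ig_trans _ hJ) => s [a [b [c [[n3 _] ->]]]].
  have [hi hj] := box3 _ _ hU.
  case: (leqP i a) => ia.
    have [t ht] := pr_factor A (introT andP (conj (andP hi).1 ia)).
    have -> : PP A B C a b c = (t * pr B b * pr C c) * A i by rewrite /PP ht; ring.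
    by apply: igM; apply: igG; left.
  case: (leqP j b) => jb.
    have [t ht] := pr_factor B (introT andP (conj (andP hj).1 jb)).
    have -> : PP A B C a b c = (pr A a * t * pr C c) * B j by rewrite /PP ht; ring.
    by apply: igM; apply: igG; right.
  by exfalso; apply: n3; apply: (down3 _ _ _ _ hU); clear -ia jb; lia.
- move=> i k hU; apply: (ig_trans _ hJ) => s [a [b [c [[_ [n2 _]] ->]]]].
  have [hi hk] := box2 _ _ hU.
  case: (leqP i a) => ia.
    have [t ht] := pr_factor A (introT andP (conj (andP hi).1 ia)).
    have -> : PP A B C a b c = (t * pr B b * pr C c) * A i by rewrite /PP ht; ring.
    by apply: igM; apply: igG; left.
  case: (leqP k c) => kc.
    have [t ht] := pr_factor C (introT andP (conj (andP hk).1 kc)).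
    have -> : PP A B C a b c = (pr A a * pr B b * t) * C k by rewrite /PP ht; ring.
    by apply: igM; apply: igG; right.
  by exfalso; apply: n2; apply: (down2 _ _ _ _ hU); clear -ia kc; lia.
- move=> j k hU; apply: (ig_trans _ hJ) => s [a [b [c [[_ [_ n1]] ->]]]].
  have [hj hk] := box1 _ _ hU.
  case: (leqP j b) => jb.
    have [t ht] := pr_factor B (introT andP (conj (andP hj).1 jb)).
    have -> : PP A B C a b c = (pr A a * t * pr C c) * B j by rewrite /PP ht; ring.
    by apply: igM; apply: igG; left.
  case: (leqP k c) => kc.
    have [t ht] := pr_factor C (introT andP (conj (andP hk).1 kc)).
    have -> : PP A B C a b c = (pr A a * pr B b * t) * C k by rewrite /PP ht; ring.
    by apply: igM; apply: igG; right.
  by exfalso; apply: n1; apply: (down1 _ _ _ _ hU); clear -jb kc; lia.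
Qed.
End MainInd.


Section Homog.
Variable K : fieldType.
Local Notation R := {mpoly K[6]}.
Implicit Types (p q r f g h : R) (F : nat -> R).

Definition addT (d e : nat * nat * nat) : nat * nat * nat :=
  ((d.1.1 + e.1.1)%N, (d.1.2 + e.1.2)%N, (d.2 + e.2)%N).

Lemma tdegD (m1 m2 : 'X_{1..6}) : tdeg (m1 + m2)%MM = addT (tdeg m1) (tdeg m2).
Proof. rewrite /tdeg /addT /= !mnmDE; congr (_, _, _); exact: addnACA. Qed.

Lemma thomogM f g d e : thomog f d -> thomog g e -> thomog (f * g) (addT d e).
Proof.
move=> hf hg m /msuppM_le /allpairsP [[m1 m2] /= [h1 h2 ->]].
by rewrite tdegD hf // hg.
Qed.

Lemma thomog1 : thomog (1 : R) (0%N, 0%N, 0%N).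
Proof.
by move=> m; rewrite -mpolyC1 msupp1 inE => /eqP ->; rewrite /tdeg !mnm0E.
Qed.

Lemma thomogX (m : 'X_{1..6}) : thomog ('X_[m] : R) (tdeg m).
Proof. by move=> m' /mem_msuppXP <-. Qed.

Lemma thomog_uniq g d e : g != 0 -> thomog g d -> thomog g e -> d = e.
Proof.
move=> nz hd he; case E: (msupp g) => [|m s].
  by move: nz; rewrite [g]mpolyE E big_nil eqxx.
have hm : m \in msupp g by rewrite E inE eqxx.
by rewrite -(hd m hm) (he m hm).
Qed.

Lemma thomog_pr F a x y z : (forall i, (0 < i <= a)%N -> thomog (F i) (x, y, z)) ->
  thomog (pr F a) ((a * x)%N, (a * y)%N, (a * z)%N).
Proof.
elim: a => [|a IH] h; first by rewrite pr0 !mul0n; exact: thomog1.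
rewrite pr_Sr.
have -> : ((a.+1 * x)%N, (a.+1 * y)%N, (a.+1 * z)%N) = addT ((a * x)%N, (a * y)%N, (a * z)%N) (x, y, z).
  by rewrite /addT /= !mulSn !(addnC x) !(addnC y) !(addnC z).
apply: thomogM; last by apply: h; rewrite leqnn.
by apply: IH => i /andP [i0 ia]; apply: h; rewrite i0 ltnW.
Qed.

Definition tcomp d p := \sum_(m <- msupp p | tdeg m == d) p@_m *: 'X_[m].

Lemma tcompE d p k : (tcomp d p)@_k = if tdeg k == d then p@_k else 0.
Proof.
rewrite /tcomp raddf_sum /= big_mkcond /=.
case: (boolP (k \in msupp p)) => hk.
  rewrite (bigD1_seq k) ?msupp_uniq //= big1 ?addr0.
    by case: ifP => _ //; rewrite mcoeffZ mcoeffX eqxx mulr1.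
  move=> m hm; case: ifP => _ //; rewrite mcoeffZ mcoeffX.
  by rewrite (negbTE hm) mulr0.
rewrite memN_msupp_eq0 // if_same big1_seq // => m /andP [_ hm].
case: ifP => _ //; rewrite mcoeffZ mcoeffX.
by case: eqP => [e|_]; [move: hk; rewrite -e hm|rewrite mulr0].
Qed.

Lemma tcompD d p q : tcomp d (p + q) = tcomp d p + tcomp d q.
Proof.
apply/mpolyP => k; rewrite mcoeffD !tcompE mcoeffD.
by case: ifP => _; rewrite ?addr0.
Qed.

Lemma tcomp0 d : tcomp d 0 = 0.
Proof. by apply/mpolyP => k; rewrite tcompE mcoeff0; case: ifP. Qed.

Lemma tcompZ d c p : tcomp d (c *: p) = c *: tcomp d p.
Proof.
apply/mpolyP => k; rewrite mcoeffZ !tcompE mcoeffZ.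
by case: ifP => _; rewrite ?mulr0.
Qed.

Lemma tcomp_sum d (I : Type) (s : seq I) (F : I -> R) :
  tcomp d (\sum_(i <- s) F i) = \sum_(i <- s) tcomp d (F i).
Proof.
elim: s => [|x s IH]; first by rewrite !big_nil tcomp0.
by rewrite !big_cons tcompD IH.
Qed.

Lemma tcomp_hom d e h : thomog h e -> tcomp d h = if e == d then h else 0.
Proof.
move=> he; apply/mpolyP => k; rewrite tcompE.
case: (boolP (k \in msupp h)) => hk.
  by rewrite (he _ hk); case: ifP => _; rewrite ?mcoeff0.
by rewrite memN_msupp_eq0 //; case: ifP => _; case: ifP => _; rewrite ?mcoeff0 ?memN_msupp_eq0.
Qed.

Lemma tcomp_id d g : thomog g d -> tcomp d g = g.
Proof. by move=> h; rewrite (tcomp_hom d h) eqxx. Qed.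

Definition le3' (d e : nat * nat * nat) : Prop :=
  (d.1.1 <= e.1.1)%N /\ (d.1.2 <= e.1.2)%N /\ (d.2 <= e.2)%N.

Lemma tcompM d e q f : thomog f e ->
  exists q', tcomp d (q * f) = q' * f /\ (~ le3 e d -> q' = 0).
Proof.
move=> hf.
exists (\sum_(m <- msupp q) q@_m *: (if addT (tdeg m) e == d then 'X_[m] else 0)).
split.
  rewrite {1}[q]mpolyE big_distrl /= tcomp_sum big_distrl /=; apply: eq_bigr => m _.
  rewrite -scalerAl tcompZ -scalerAl; congr (_ *: _).
  rewrite (tcomp_hom d (thomogM (thomogX (m := m)) hf)).
  by case: ifP => _; rewrite ?mul0r.
move=> hle; apply: big1 => m _; case: eqP => [he|_]; last by rewrite scaler0.
exfalso; apply: hle; rewrite -he /le3 /addT /=.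
by case: (tdeg m) => [[x y] z]; case: e {hf he} => [[x' y'] z'] /=; rewrite !leq_addl.
Qed.

End Homog.


Section Gen.
Variable K : fieldType.
Local Notation R := {mpoly K[6]}.
Implicit Types (p q r h : R) (F : nat -> R).

Lemma ig_sum_seq (S : R -> Prop) (T : eqType) (l : seq T) (G : T -> R) :
  (forall x, x \in l -> ideal_gen S (G x)) -> ideal_gen S (\sum_(x <- l) G x).
Proof.
elim: l => [|x l IH] h; first by rewrite big_nil; exact: ig0.
rewrite big_cons; apply: igD; first by apply: h; rewrite inE eqxx.
by apply: IH => y hy; apply: h; rewrite inE hy orbT.
Qed.

Lemma le3_refl e : le3 e e.
Proof. by case: e => [[a b] c]; rewrite /le3 /= !leqnn. Qed.

Lemma le3_trans e f g : le3 e f -> le3 f g -> le3 e g.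
Proof.
case: e => [[a b] c]; case: f => [[a' b'] c']; case: g => [[a'' b''] c''].
rewrite /le3 /= => [[h1 [h2 h3]] [h4 [h5 h6]]]; split; [|split]; lia.
Qed.

Lemma le3_anti e f : le3 e f -> le3 f e -> e = f.
Proof.
case: e => [[a b] c]; case: f => [[a' b'] c'].
rewrite /le3 /= => [[h1 [h2 h3]] [h4 [h5 h6]]].
have -> : a = a' by lia. have -> : b = b' by lia. have -> : c = c' by lia. by [].
Qed.

Lemma deg_inv (I : R -> Prop) (FF G : R -> Prop) (g : R) d :
  generates FF I -> (forall f, FF f -> exists e, thomog f e) ->
  min_hom_generates G I -> G g -> g != 0 -> thomog g d ->
  exists f, FF f /\ f != 0 /\ thomog f d.
Proof.
move=> hF hFh [[hG hGmin] hGh] Gg nzg hgd.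
apply: NNPP => hno; apply: (hGmin g Gg).
have Ig : I g by apply/hG; apply: igG.
have [l [hl hsum]] := (hF g).1 Ig.
have E : tcomp d g = \sum_(i <- l) tcomp d (i.1 * i.2) by rewrite {1}hsum tcomp_sum.
suff : ideal_gen (fun q => G q /\ q <> g) (\sum_(i <- l) tcomp d (i.1 * i.2)).
  by rewrite -E tcomp_id.
apply: ig_sum_seq => -[q f] /hl /= Ff.
have [e he] := hFh f Ff.
have [q' [-> hq']] := tcompM d q he.
have [->|nzq] := eqVneq q' 0; first by rewrite mul0r; apply: ig0.
have led : le3 e d by apply: NNPP => /hq' q0; rewrite q0 eqxx in nzq.
have [->|nzf] := eqVneq f 0; first by rewrite mulr0; apply: ig0.
have ned : e <> d by move=> ede; apply: hno; exists f; split => //; split => //; rewrite -ede.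
apply: igM.
have If : I f by apply/hF; apply: igG.
have [l2 [hl2 hsum2]] := (hG f).1 If.
rewrite -(tcomp_id he) hsum2 tcomp_sum; apply: ig_sum_seq => -[r g'] hin /=.
have Gg' := hl2 _ hin; rewrite /= in Gg'.
have [e' he'] := hGh g' Gg'.
have [r' [-> hr']] := tcompM e r he'.
have [->|nzr] := eqVneq r' 0; first by rewrite mul0r; apply: ig0.
have le' : le3 e' e by apply: NNPP => /hr' r0; rewrite r0 eqxx in nzr.
apply: igM; apply: igG; split => // eg; subst g'.
have de' := thomog_uniq nzg hgd he'; subst e'.
by apply: ned; apply: le3_anti.
Qed.

Lemma irred (T : nat * nat * nat -> Prop) (P : nat * nat * nat -> R) :
  (forall e, T e -> thomog (P e) e /\ P e != 0) ->
  (forall e f, T e -> T f -> le3 f e -> f = e) ->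
  forall s, (exists e, T e /\ s = P e) ->
  ~ ideal_gen (fun q => (exists e, T e /\ q = P e) /\ q <> s) s.
Proof.
move=> hP hanti s [e [Te ->]] [l [hl hsum]].
have [he nz] := hP e Te; move/eqP: nz; apply.
rewrite -(tcomp_id he) hsum tcomp_sum big1_seq // => -[q f] /andP [_ hin] /=.
have [[f' [Tf' ef]] nef] := hl _ hin; rewrite /= in ef nef; rewrite ef in nef *.
have [hf' _] := hP f' Tf'.
have [q' [-> hq']] := tcompM e q hf'.
have [->|nzq] := eqVneq q' 0; first by rewrite mul0r.
have le' : le3 f' e by apply: NNPP => /hq' q0; rewrite q0 eqxx in nzq.
by exfalso; apply: nef; rewrite (hanti _ _ Te Tf' le').
Qed.

Definition minP (N : nat * nat * nat -> Prop) e := N e /\ forall f, N f -> le3 f e -> f = e.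

Lemma le3_lt (e f : nat * nat * nat) : le3 f e -> f <> e ->
  (f.1.1 + f.1.2 + f.2 < e.1.1 + e.1.2 + e.2)%N.
Proof.
case: f => [[a b] c]; case: e => [[a' b'] c'].
rewrite /le3 /= => -[h1 [h2 h3]] nf.
have : (a + b + c < a' + b' + c')%N \/ (a = a' /\ b = b' /\ c = c') by lia.
by case => // -[ea [eb ec]]; subst.
Qed.

Lemma min_below (N : nat * nat * nat -> Prop) x : N x -> exists m, minP N m /\ le3 m x.
Proof.
move: {2}(x.1.1 + x.1.2 + x.2)%N (erefl (x.1.1 + x.1.2 + x.2)%N) => n.
elim/ltn_ind: n x => n IH x hx Nx.
case: (classic (exists f, N f /\ le3 f x /\ f <> x)) => [[f [Nf [lf nf]]]|H].
  have lt : (f.1.1 + f.1.2 + f.2 < n)%N by rewrite -hx; apply: le3_lt.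
  have [m [hm lm]] := IH _ lt f erefl Nf.
  by exists m; split => //; apply: le3_trans lf.
exists x; split; last exact: le3_refl.
split => // f Nf lf; apply: NNPP => nf; apply: H; exists f; split => //.
Qed.

Lemma Dset_ext (I I' : R -> Prop) d : (forall p, I p <-> I' p) -> Dset I d -> Dset I' d.
Proof.
move=> hI [G [[[hg hmin] hh] hd]]; exists G; split => //; split => //; split => //.
by move=> p; rewrite -hI.
Qed.

Lemma min_generates_ext (S S' I : R -> Prop) : (forall p, S p <-> S' p) ->
  min_generates S' I -> min_generates S I.
Proof.
move=> hS [hg hmin]; split.
  move=> p; rewrite hg; split; apply: ig_mono => s; rewrite hS //.
move=> s /hS Ss hs; apply: (hmin s Ss); apply: ig_mono hs => q [/hS Sq nq]; by split.
Qed.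

End Gen.


Section Lin.
Variable K : fieldType.
Local Notation R := {mpoly K[6]}.

Lemma lin_of (v w : 'I_6) (L : R) : v != w ->
  (forall m, m \in msupp L -> (m v + m w = 1)%N /\ forall i, i != v -> i != w -> m i = 0%N) ->
  lin v w L.
Proof.
move=> vw h; exists L@_U_(v)%MM, L@_U_(w)%MM; apply/mpolyP => k.
rewrite mcoeffD !mcoeffZ !mcoeffX.
have hUvw : (U_(v)%MM == U_(w)%MM :> 'X_{1..6}) = false by rewrite eq_mnm1 (negbTE vw).
case: (eqVneq U_(v)%MM k) => [<-|nv]; first by rewrite eq_sym hUvw mulr1 mulr0 addr0.
case: (eqVneq U_(w)%MM k) => [<-|nw]; first by rewrite mulr1 mulr0 add0r.
rewrite !mulr0 addr0; apply: memN_msupp_eq0; apply/negP => hk.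
have [hs hz] := h k hk.
have kv : (k v = 1 /\ k w = 0 \/ k v = 0 /\ k w = 1)%N by clear -hs; lia.
case: kv => [[k1 k0]|[k0 k1]].
  move/eqP: nv; apply; apply/mnmP => i; rewrite mnm1E.
  case: (eqVneq v i) => [<-|ni]; first by rewrite k1.
  case: (eqVneq w i) => [<-|ni']; first by rewrite k0.
  by rewrite hz // eq_sym.
move/eqP: nw; apply; apply/mnmP => i; rewrite mnm1E.
case: (eqVneq w i) => [<-|ni']; first by rewrite k1.
case: (eqVneq v i) => [<-|ni]; first by rewrite k0.
by rewrite hz // eq_sym.
Qed.

Lemma ord6 (i : 'I_6) : i = i0 \/ i = i1 \/ i = i2 \/ i = i3 \/ i = i4 \/ i = i5.
Proof.
case: i => [[|[|[|[|[|[|n]]]]]] hi] //.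
- by left; apply: val_inj.
- by right; left; apply: val_inj.
- by right; right; left; apply: val_inj.
- by right; right; right; left; apply: val_inj.
- by right; right; right; right; left; apply: val_inj.
- by right; right; right; right; right; apply: val_inj.
Qed.

Lemma lin_of1 (L : R) : thomog L (1, 0, 0)%N -> lin i0 i1 L.
Proof.
move=> h; apply: lin_of => // m /h; rewrite /tdeg => -[e1 e2 e3]; split => // i ni0 ni1.
by move: ni0 ni1; case: (ord6 i) => [->|[->|[->|[->|[->|->]]]]]; rewrite ?eqxx //; clear -e2 e3; lia.
Qed.

Lemma lin_of2 (L : R) : thomog L (0, 1, 0)%N -> lin i2 i3 L.
Proof.
move=> h; apply: lin_of => // m /h; rewrite /tdeg => -[e1 e2 e3]; split => // i ni0 ni1.
by move: ni0 ni1; case: (ord6 i) => [->|[->|[->|[->|[->|->]]]]]; rewrite ?eqxx //; clear -e1 e3; lia.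
Qed.

Lemma lin_of3 (L : R) : thomog L (0, 0, 1)%N -> lin i4 i5 L.
Proof.
move=> h; apply: lin_of => // m /h; rewrite /tdeg => -[e1 e2 e3]; split => // i ni0 ni1.
by move: ni0 ni1; case: (ord6 i) => [->|[->|[->|[->|[->|->]]]]]; rewrite ?eqxx //; clear -e1 e2; lia.
Qed.

End Lin.


Lemma neqS (n : nat) : n = n.+1 -> False.
Proof. by move/eqP; rewrite eqn_leq ltnn andbF. Qed.

Section Final.
Variable K : fieldType.
Local Notation R := {mpoly K[6]}.
Variables (d1 d2 d3 : nat) (A B C : nat -> R).
Hypotheses (hA : distinct_forms A d1 (1, 0, 0)%N) (hB : distinct_forms B d2 (0, 1, 0)%N)
  (hC : distinct_forms C d3 (0, 0, 1)%N).

Lemma famA : fam i0 i1 A d1.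
Proof. case: hA => h1 h2; split => // i hi; have [nz th] := h1 i hi; split => //; exact: lin_of1. Qed.
Lemma famB : fam i2 i3 B d2.
Proof. case: hB => h1 h2; split => // i hi; have [nz th] := h1 i hi; split => //; exact: lin_of2. Qed.
Lemma famC : fam i4 i5 C d3.
Proof. case: hC => h1 h2; split => // i hi; have [nz th] := h1 i hi; split => //; exact: lin_of3. Qed.

Lemma bab : blocks2 i0 i1 i2 i3. Proof. by []. Qed.
Lemma bac : blocks2 i0 i1 i4 i5. Proof. by []. Qed.
Lemma bbc : blocks2 i2 i3 i4 i5. Proof. by []. Qed.

Definition Nt (U3 U2 U1 : nat -> nat -> Prop) (e : nat * nat * nat) :=
  NN U3 U2 U1 e.1.1 e.1.2 e.2.
Definition PPt (e : nat * nat * nat) := PP A B C e.1.1 e.1.2 e.2.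
Definition MinS U3 U2 U1 (p : R) := exists e, minP (Nt U3 U2 U1) e /\ p = PPt e.

Lemma PP_hom a b c : (a <= d1)%N -> (b <= d2)%N -> (c <= d3)%N ->
  thomog (PP A B C a b c) (a, b, c).
Proof.
move=> ha hb hc.
have tA := @thomog_pr K A a 1 0 0 (fun i hi => (hA.1 i
  (let: conj i0 ia := andP hi in introT andP (conj i0 (leq_trans ia ha)))).2).
have tB := @thomog_pr K B b 0 1 0 (fun i hi => (hB.1 i
  (let: conj i0 ia := andP hi in introT andP (conj i0 (leq_trans ia hb)))).2).
have tC := @thomog_pr K C c 0 0 1 (fun i hi => (hC.1 i
  (let: conj i0 ia := andP hi in introT andP (conj i0 (leq_trans ia hc)))).2).
have := thomogM (thomogM tA tB) tC.
by rewrite /addT /= !muln1 !muln0 !addn0 !add0n.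
Qed.

Lemma PP_nz a b c : (a <= d1)%N -> (b <= d2)%N -> (c <= d3)%N -> PP A B C a b c != 0.
Proof.
move=> ha hb hc; rewrite /PP !mulf_neq0 //; apply: pr_neq0 => i /andP [i0 ia].
- by case: (hA.1 i); rewrite ?i0 ?(leq_trans ia ha).
- by case: (hB.1 i); rewrite ?i0 ?(leq_trans ia hb).
- by case: (hC.1 i); rewrite ?i0 ?(leq_trans ia hc).
Qed.

Lemma PPt_hom e : (e.1.1 <= d1)%N -> (e.1.2 <= d2)%N -> (e.2 <= d3)%N -> thomog (PPt e) e.
Proof. by case: e => [[a b] c]; exact: PP_hom. Qed.

Lemma min_range U3 U2 U1 : ferrers U3 d1 d2 -> ferrers U2 d1 d3 -> ferrers U1 d2 d3 ->
  forall e, minP (Nt U3 U2 U1) e -> [/\ (e.1.1 <= d1)%N, (e.1.2 <= d2)%N & (e.2 <= d3)%N].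
Proof.
move=> [box3 _] [box2 _] [box1 _] [[a b] c] [[n3 [n2 n1]] hmin] /=.
rewrite /= in n3 n2 n1; split.
- case: a n3 n2 hmin => [|a] n3 n2 hmin //.
  case: (classic (U3 a.+1 b.+1)) => [/box3 [/andP [_ h] _] //|h3].
  case: (classic (U2 a.+1 c.+1)) => [/box2 [/andP [_ h] _] //|h2].
  have e : ((a, b), c) = ((a.+1, b), c).
    by apply: hmin; [exact: (conj h3 (conj h2 n1))|rewrite /le3 /= leqnSn !leqnn].
  by case: e => /neqS.
- case: b n3 n1 hmin => [|b] n3 n1 hmin //.
  case: (classic (U3 a.+1 b.+1)) => [/box3 [_ /andP [_ h]] //|h3].
  case: (classic (U1 b.+1 c.+1)) => [/box1 [/andP [_ h] _] //|h1].
  have e : ((a, b), c) = ((a, b.+1), c).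
    by apply: hmin; [exact: (conj h3 (conj n2 h1))|rewrite /le3 /= leqnSn !leqnn].
  by case: e => /neqS.
- case: c n2 n1 hmin => [|c] n2 n1 hmin //.
  case: (classic (U2 a.+1 c.+1)) => [/box2 [_ /andP [_ h]] //|h2].
  case: (classic (U1 b.+1 c.+1)) => [/box1 [_ /andP [_ h]] //|h1].
  have e : ((a, b), c) = ((a, b), c.+1).
    by apply: hmin; [exact: (conj n3 (conj h2 h1))|rewrite /le3 /= leqnSn !leqnn].
  by case: e => /neqS.
Qed.

Section Fer.
Variables (U3 U2 U1 : nat -> nat -> Prop).
Hypotheses (h3 : ferrers U3 d1 d2) (h2 : ferrers U2 d1 d3) (h1 : ferrers U1 d2 d3).

Lemma gens_min : min_hom_generates (MinS U3 U2 U1) (I_X A B C U3 U2 U1).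
Proof.
have gN := gen_N bab bac bbc famA famB famC h3 h2 h1.
have hPP : forall e, minP (Nt U3 U2 U1) e -> thomog (PPt e) e /\ PPt e != 0.
  move=> e he; have [ra rb rc] := min_range h3 h2 h1 he; split; first exact: PPt_hom.
  by case: e {he} ra rb rc => [[a b] c]; exact: PP_nz.
split; [split|].
- move=> p; rewrite gN; split.
    apply: ig_trans => s [a [b [c [hN ->]]]].
    have [[[a' b'] c'] [hm [la [lb lc]]]] := min_below (N := Nt U3 U2 U1) (x := (a, b, c)) hN.
    rewrite /= in la lb lc.
    have [t1 e1] := pr_le A la; have [t2 e2] := pr_le B lb; have [t3 e3] := pr_le C lc.
    have -> : PP A B C a b c = (t1 * t2 * t3) * PPt (a', b', c').
      by rewrite /PPt /PP /= e1 e2 e3; ring.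
    by apply: igM; apply: igG; exists (a', b', c').
  apply: ig_mono => s [e [[hN _] ->]]; exists e.1.1, e.1.2, e.2; split => //.
- move=> s hs; apply: (irred (T := minP (Nt U3 U2 U1)) (P := PPt)) => //.
  by move=> e f [_ hmin] [Nf _] lfe; exact: hmin f Nf lfe.
- by move=> s [e [he ->]]; exists e; have [] := hPP e he.
Qed.

Lemma Dset_char d : Dset (I_X A B C U3 U2 U1) d <-> minP (Nt U3 U2 U1) d.
Proof.
have gm := gens_min; split.
  move=> [G [hG [g [Gg [nz hgd]]]]].
  have [f [[e [he ->]] [nzf hfd]]] := deg_inv gm.1.1 gm.2 hG Gg nz hgd.
  have [ra rb rc] := min_range h3 h2 h1 he.
  by rewrite (thomog_uniq nzf hfd (PPt_hom ra rb rc)).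
move=> hd; exists (MinS U3 U2 U1); split => //; exists (PPt d); split; first by exists d.
have [ra rb rc] := min_range h3 h2 h1 hd; split; last exact: PPt_hom.
by case: d {hd} ra rb rc => [[a b] c]; exact: PP_nz.
Qed.

End Fer.

Lemma D3_char U3 (h3 : ferrers U3 d1 d2) x :
  Dset (I_X3 A B U3) x <-> minP (Nt U3 emp emp) x.
Proof.
rewrite -(Dset_char h3 (ferrers_emp _ _) (ferrers_emp _ _)).
have E : forall p, I_X3 A B U3 p <-> I_X A B C U3 emp emp p.
  by move=> p; split => [h|[h _]] //; split => //; split => ? ? [].
by split; apply: Dset_ext => p; rewrite E.
Qed.

Lemma D2_char U2 (h2 : ferrers U2 d1 d3) x :
  Dset (I_X2 A C U2) x <-> minP (Nt emp U2 emp) x.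
Proof.
rewrite -(Dset_char (ferrers_emp _ _) h2 (ferrers_emp _ _)).
have E : forall p, I_X2 A C U2 p <-> I_X A B C emp U2 emp p.
  by move=> p; split => [h|[_ [h _]]] //; split; [move=> ? ? []|split => // ? ? []].
by split; apply: Dset_ext => p; rewrite E.
Qed.

Lemma D1_char U1 (h1 : ferrers U1 d2 d3) x :
  Dset (I_X1 B C U1) x <-> minP (Nt emp emp U1) x.
Proof.
rewrite -(Dset_char (ferrers_emp _ _) (ferrers_emp _ _) h1).
have E : forall p, I_X1 B C U1 p <-> I_X A B C emp emp U1 p.
  by move=> p; split => [h|[_ [_ h]]] //; split; [move=> ? ? []|split => // ? ? []].
by split; apply: Dset_ext => p; rewrite E.
Qed.

Section Fer2.
Variables (U3 U2 U1 : nat -> nat -> Prop).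
Hypotheses (h3 : ferrers U3 d1 d2) (h2 : ferrers U2 d1 d3) (h1 : ferrers U1 d2 d3).

Lemma DX_N e : DX A B C U3 U2 U1 e -> Nt U3 U2 U1 e.
Proof.
move=> [a3 [b3 [a2 [c2 [b1 [c1 [D3 [D2 [D1 ->]]]]]]]]].
move: D3 => /(D3_char h3) [[n3 _] _]; move: D2 => /(D2_char h2) [[_ [n2 _]] _].
move: D1 => /(D1_char h1) [[_ [_ n1]] _].
rewrite /Nt /NN /= in n3 n2 n1 *.
have [_ down3] := h3; have [_ down2] := h2; have [_ down1] := h1.
split; [|split].
- by move=> hU; apply: n3; apply: (down3 _ _ _ _ hU); rewrite /= ltnS ?leq_maxl.
- by move=> hU; apply: n2; apply: (down2 _ _ _ _ hU); rewrite /= ltnS ?leq_maxr.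
- by move=> hU; apply: n1; apply: (down1 _ _ _ _ hU); rewrite /= ltnS ?leq_maxr ?leq_maxl.
Qed.

Lemma N_DX e : Nt U3 U2 U1 e -> exists e', DX A B C U3 U2 U1 e' /\ le3 e' e.
Proof.
case: e => [[a b] c]; rewrite /Nt /NN /= => -[n3 [n2 n1]].
have N3 : Nt U3 emp emp (a, b, 0%N) by split => //; split.
have N2 : Nt emp U2 emp (a, 0%N, c) by split => //; split.
have N1 : Nt emp emp U1 (0%N, b, c) by split => //; split.
have [[[a3 b3] z3] [hm3 [la3 [lb3 lz3]]]] := min_below N3.
have [[[a2 y2] c2] [hm2 [la2 [ly2 lc2]]]] := min_below N2.
have [[[x1 b1] c1] [hm1 [lx1 [lb1 lc1]]]] := min_below N1.
move: lz3 ly2 lx1; rewrite /= !leqn0 => /eqP ez /eqP ey /eqP ex; subst z3 y2 x1.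
rewrite /= in la3 lb3 la2 lc2 lb1 lc1.
exists (maxn a3 a2, maxn b3 b1, maxn c1 c2); split.
  exists a3, b3, a2, c2, b1, c1; split; first exact/(D3_char h3).
  split; first exact/(D2_char h2).
  by split; first exact/(D1_char h1).
by rewrite /le3 /= !geq_max la3 la2 lb3 lb1 lc1 lc2.
Qed.

Lemma DhatX_char e : DhatX A B C U3 U2 U1 e <-> minP (Nt U3 U2 U1) e.
Proof.
split.
  move=> [De hmin]; split; first exact: DX_N De.
  move=> f Nf lfe; have [f' [Df' lf']] := N_DX Nf.
  have ee := hmin f' Df' (le3_trans lf' lfe); subst f'.
  exact: le3_anti lfe lf'.
move=> [Ne hmin]; have [e' [De' le']] := N_DX Ne.
have ee := hmin e' (DX_N De') le'; subst e'.
by split => // f Df lfe; exact: hmin f (DX_N Df) lfe.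
Qed.

Theorem main_thm :
  min_generates
    (fun p => exists a b c, DhatX A B C U3 U2 U1 (a, b, c) /\
       p = (\prod_(1 <= i < a.+1) A i) * (\prod_(1 <= j < b.+1) B j)
           * (\prod_(1 <= k < c.+1) C k))
    (I_X A B C U3 U2 U1).
Proof.
apply: (min_generates_ext _ (gens_min h3 h2 h1).1) => p; split.
  by move=> [a [b [c [hD ->]]]]; exists (a, b, c); split => //; exact/DhatX_char.
by move=> [[[a b] c] [hm ->]]; exists a, b, c; split => //; exact/DhatX_char.
Qed.

End Fer2.

End Final.

Unset Implicit Arguments.

Theorem theorem4p3 (K : closedFieldType) (charK0 : [pchar K] =i pred0)
  (d1 d2 d3 : nat) (A B C : nat -> {mpoly K[6]})
  (U3 U2 U1 : nat -> nat -> Prop)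
  (hA : distinct_forms A d1 (1, 0, 0)%N)
  (hB : distinct_forms B d2 (0, 1, 0)%N)
  (hC : distinct_forms C d3 (0, 0, 1)%N)
  (hU3 : ferrers U3 d1 d2) (hU2 : ferrers U2 d1 d3) (hU1 : ferrers U1 d2 d3)
  (hAused : forall i, (1 <= i <= d1)%N -> (exists j, U3 i j) \/ (exists k, U2 i k))
  (hBused : forall j, (1 <= j <= d2)%N -> (exists i, U3 i j) \/ (exists k, U1 j k))
  (hCused : forall k, (1 <= k <= d3)%N -> (exists i, U2 i k) \/ (exists j, U1 j k)) :
  min_generates
    (fun p => exists a b c, DhatX A B C U3 U2 U1 (a, b, c) /\
       p = (\prod_(1 <= i < a.+1) A i) * (\prod_(1 <= j < b.+1) B j)
           * (\prod_(1 <= k < c.+1) C k))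
    (I_X A B C U3 U2 U1).
Proof.
exact: (main_thm hA hB hC hU3 hU2 hU1).
Qed.
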